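(* Let $Q$ be a quiver without oriented cycles and $v_0\in Q_0$ a vertex whose only incident arrows are arrows $a_1,\dots,a_l$ with $ta_i=v_i$, $ha_i=v_0$, and a single arrow $b$ with $tb=v_0$, $hb=w$. Let $\beta$ be a dimension vector and $\sigma\in\mathbb{Z}^{Q_0}$ a weight with $\beta(v_0)\ge\beta(w)$ and $\sigma(v_0)=0$. Let $\overline{Q}$ be the quiver with $\overline{Q}_0=Q_0\setminus\{v_0\}$ and $\overline{Q}_1=(Q_1\setminus\{b,a_1,\dots,a_l\})\cup\{ba_1,\dots,ba_l\}$, where $ba_i$ is a new arrow from $v_i$ to $w$. Let $\overline\beta,\overline\sigma$ be the restrictions of $\beta,\sigma$ to $\overline{Q}_0$. Then $\operatorname{SI}(Q,\beta)_\sigma\cong\operatorname{SI}(\overline{Q},\overline\beta)_{\overline\sigma}$. The same holds with the orientations of all the arrows $a_i$ and $b$ reversed.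
   Context: Work over an algebraically closed field $k$ of characteristic zero. $\operatorname{SI}(Q,\beta)_\sigma$ is the space of polynomial functions $f$ on $\operatorname{Rep}(Q,\beta)=\bigoplus_a\operatorname{Hom}_k(k^{\beta(ta)},k^{\beta(ha)})$ satisfying $g\cdot f=\sigma(g)f$ for all $g\in\operatorname{GL}(\beta)=\prod_x\operatorname{GL}(\beta(x))$, where $\operatorname{GL}(\beta)$ acts by $(g\cdot W)(a)=g(ha)W(a)g(ta)^{-1}$ and $\sigma(g)=\prod_x\det(g(x))^{\sigma(x)}$. *)

(* Defs.v *)
From HB Require Import structures.
From mathcomp Require Import all_boot all_order all_algebra.
Unset Printing Implicit Defensive.
Import Order.TTheory GRing.Theory Num.Theory.
Local Open Scope ring_scope.

Record quiver := Quiver {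
  qV : finType; qA : finType; qt : qA -> qV; qh : qA -> qV }.
Arguments qt {q} a.
Arguments qh {q} a.
Arguments Quiver {qV qA} qt qh.

Definition qedge (Q : quiver) : rel (qV Q) :=
  fun x y => [exists a : qA Q, (qt a == x) && (qh a == y)].

Definition acyclic (Q : quiver) : Prop :=
  forall a : qA Q, ~~ connect (qedge Q) (qh a) (qt a).

Section Reps.
Variable k : fieldType.

(* Rep(Q,beta) = (+)_a Hom(k^{beta(ta)}, k^{beta(ha)}), matrices acting on columns *)
Definition Rep (Q : quiver) (beta : qV Q -> nat) : Type :=
  forall a : qA Q, 'M[k]_(beta (qh a), beta (qt a)).

Inductive polyfun (Q : quiver) (beta : qV Q -> nat) : (Rep Q beta -> k) -> Prop :=
| pf_const (c : k) : polyfun Q beta (fun _ => c)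
| pf_coord (a : qA Q) (i : 'I_(beta (qh a))) (j : 'I_(beta (qt a))) :
    polyfun Q beta (fun W => W a i j)
| pf_add f g : polyfun Q beta f -> polyfun Q beta g -> polyfun Q beta (fun W => f W + g W)
| pf_mul f g : polyfun Q beta f -> polyfun Q beta g -> polyfun Q beta (fun W => f W * g W).

Definition GLfam (Q : quiver) (beta : qV Q -> nat) := forall x : qV Q, 'M[k]_(beta x).

Definition is_GL (Q : quiver) (beta : qV Q -> nat) (g : GLfam Q beta) : Prop :=
  forall x, g x \in unitmx.

Definition act (Q : quiver) (beta : qV Q -> nat) (g : GLfam Q beta) (W : Rep Q beta)
  : Rep Q beta := fun a => g (qh a) *m W a *m invmx (g (qt a)).

Definition GLinv (Q : quiver) (beta : qV Q -> nat) (g : GLfam Q beta) : GLfam Q beta :=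
  fun x => invmx (g x).

Definition charac (Q : quiver) (beta : qV Q -> nat) (sigma : qV Q -> int)
  (g : GLfam Q beta) : k := \prod_(x : qV Q) (\det (g x)) ^ (sigma x).

(* SI(Q,beta)_sigma : polynomial f with g.f = sigma(g) f, where (g.f)(W) = f(g^{-1}.W) *)
Definition SI (Q : quiver) (beta : qV Q -> nat) (sigma : qV Q -> int)
  (f : Rep Q beta -> k) : Prop :=
  polyfun Q beta f /\
  forall g : GLfam Q beta, is_GL Q beta g ->
    forall W, f (act Q beta (GLinv Q beta g) W) = charac Q beta sigma g * f W.

Definition SI_iso (Q : quiver) (beta : qV Q -> nat) (sigma : qV Q -> int)
  (Q' : quiver) (beta' : qV Q' -> nat) (sigma' : qV Q' -> int) : Prop :=
  exists F : (Rep Q beta -> k) -> (Rep Q' beta' -> k),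
    [/\ (forall (c : k) f1 f2,
          F (fun W => c * f1 W + f2 W) = (fun W' => c * F f1 W' + F f2 W')),
        (forall f, SI Q beta sigma f -> SI Q' beta' sigma' (F f)),
        (forall f1 f2, SI Q beta sigma f1 -> SI Q beta sigma f2 -> F f1 = F f2 -> f1 = f2) &
        (forall f', SI Q' beta' sigma' f' -> exists2 f, SI Q beta sigma f & F f = f')].
End Reps.

Section Contract.
Variables (Q : quiver) (v0 w : qV Q) (hw : w != v0).

Definition barV : finType := {x : qV Q | x != v0}.

Definition keepP : pred (qA Q) := fun a => (qt a != v0) && (qh a != v0).
Definition inP : pred (qA Q) := fun a => (qh a == v0) && (qt a != v0).
Definition outP : pred (qA Q) := fun a => (qt a == v0) && (qh a != v0).

Lemma keep_t (a : {a | keepP a}) : qt (val a) != v0.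
Proof. by case/andP: (valP a). Qed.
Lemma keep_h (a : {a | keepP a}) : qh (val a) != v0.
Proof. by case/andP: (valP a). Qed.
Lemma in_t (a : {a | inP a}) : qt (val a) != v0.
Proof. by case/andP: (valP a). Qed.
Lemma out_h (a : {a | outP a}) : qh (val a) != v0.
Proof. by case/andP: (valP a). Qed.

Definition barW : barV := exist _ w hw.

(* forward: arrows of Q not incident to v0, plus composites b a_i : v_i -> w *)
Definition barA : finType := ({a | keepP a} + {a | inP a})%type.
Definition bar_t (e : barA) : barV :=
  match e with
  | inl a => exist _ (qt (val a)) (keep_t a)
  | inr a => exist _ (qt (val a)) (in_t a)
  end.
Definition bar_h (e : barA) : barV :=
  match e with
  | inl a => exist _ (qh (val a)) (keep_h a)
  | inr a => barW
  end.
Definition Qbar : quiver := Quiver bar_t bar_h.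

(* reversed: composites a_i b : w -> v_i *)
Definition barA' : finType := ({a | keepP a} + {a | outP a})%type.
Definition bar_t' (e : barA') : barV :=
  match e with
  | inl a => exist _ (qt (val a)) (keep_t a)
  | inr a => barW
  end.
Definition bar_h' (e : barA') : barV :=
  match e with
  | inl a => exist _ (qh (val a)) (keep_h a)
  | inr a => exist _ (qh (val a)) (out_h a)
  end.
Definition Qbar_rev : quiver := Quiver bar_t' bar_h'.

Definition restr (T : Type) (f : qV Q -> T) : barV -> T := fun x => f (val x).
End Contract.
Arguments restr {Q} v0 {T} f x.

(* Main.v *)
Require Import Defs.
From HB Require Import structures.
From mathcomp Require Import all_boot all_order all_algebra.
From Stdlib Require Import FunctionalExtensionality.
Local Open Scope ring_scope.

Module Aux.
Set Implicit Arguments. Unset Strict Implicit. Unset Printing Implicit Defensive.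
Import Order.TTheory GRing.Theory Num.Theory.
Local Open Scope ring_scope.

Section PolyZ.
Variable k : fieldType.
Hypothesis hchar : [pchar k] =i pred0.

Lemma natr_inj_k : injective (fun n : nat => n%:R : k).
Proof.
move=> i j /= e; apply/eqP; move: e.
wlog lt : i j / (i <= j)%N => [H|].
  by case/orP: (leq_total i j) => /H // H' /esym /H'; rewrite eq_sym.
move=> e; have := (pcharf0P _).1 hchar (j - i)%N.
rewrite natrB // e subrr eqxx subn_eq0 => /esym h; by rewrite eqn_leq lt h.
Qed.

Lemma poly_eq0_natS (q : {poly k}) : (forall n, q.[n.+1%:R] = 0) -> q = 0.
Proof.
move=> h; apply: (@roots_geq_poly_eq0 _ q [seq i.+1%:R | i <- iota 0 (size q)]).
- by apply/allP => x /mapP [i _ ->]; rewrite /root h.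
- rewrite map_inj_uniq ?iota_uniq // => i j /natr_inj_k; case.
  by [].
- by rewrite size_map size_iota.
Qed.

Lemma poly_eq0_all (q : {poly k}) : (forall t, q.[t] = 0) -> q = 0.
Proof. by move=> h; apply: poly_eq0_natS. Qed.

Lemma poly_const_nz (q : {poly k}) c : (forall t, t != 0 -> q.[t] = c) -> q.[0] = c.
Proof.
move=> h; have -> : q = c%:P; last by rewrite hornerC.
apply/eqP; rewrite -subr_eq0; apply/eqP/poly_eq0_natS => n.
rewrite hornerD hornerN hornerC h ?subrr //.
by apply/eqP => /(@natr_inj_k n.+1 0).
Qed.
End PolyZ.

Section Core.
Variable k : fieldType.

Definition ev (t : k) r c (P : 'M[{poly k}]_(r, c)) : 'M[k]_(r, c) :=
  map_mx (horner_eval t) P.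

Lemma ev_const t r c (M : 'M[k]_(r, c)) : ev t (map_mx polyC M) = M.
Proof. by apply/matrixP => i j; rewrite !mxE horner_evalE hornerC. Qed.

Lemma ev_mul t r c d (P1 : 'M[{poly k}]_(r, c)) (P2 : 'M_(c, d)) :
  ev t (P1 *m P2) = ev t P1 *m ev t P2.
Proof. exact: map_mxM. Qed.

Lemma ev_add t r c (P1 P2 : 'M[{poly k}]_(r, c)) : ev t (P1 + P2) = ev t P1 + ev t P2.
Proof. exact: map_mxD. Qed.

Lemma ev_sub t r c (P1 P2 : 'M[{poly k}]_(r, c)) : ev t (P1 - P2) = ev t P1 - ev t P2.
Proof. exact: map_mxB. Qed.

Lemma ev_X t r : ev t ('X%:M : 'M_r) = t%:M.
Proof. by apply/matrixP => i j; rewrite !mxE; case: (i == j); rewrite /= ?mulr1n ?mulr0n horner_evalE ?hornerX ?horner0. Qed.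

Lemma ev_one t r : ev t (1%:M : 'M_r) = 1%:M.
Proof. exact: map_mx1. Qed.

Lemma extE m r (B : 'M[k]_(m, m + r)) :
  B *m (pid_mx m)^T \in unitmx -> exists2 G, G \in unitmx & B *m G = pid_mx m.
Proof.
rewrite -(hsubmxK B) pid_mx_row tr_row_mx trmx1 trmx0 mul_row_col mulmx1 mulmx0 addr0.
set L := lsubmx B; set R := rsubmx B => uL.
exists (block_mx (invmx L) (- (invmx L *m R)) 0 1%:M).
  apply: (proj1 (@mulmx1_unit _ _ _ (block_mx L R 0 1%:M) _)).
  rewrite mulmx_block !mulmx0 !mul0mx !mulmx1 !add0r addr0 mulVmx //.
  by rewrite subrr -scalar_mx_block.
rewrite (mul_row_block L R) mulmx0 mulmxV // addr0 mulmxN mulmxA mulmxV // mul1mx mulmx1 addNr.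
by [].
Qed.
End Core.

Section Core2.
Variable k : fieldType.
Hypothesis hchar : [pchar k] =i pred0.

Lemma char_poly_ev m (M : 'M[k]_m) t : (char_poly M).[t] = \det (t%:M - M).
Proof.
rewrite /char_poly -horner_evalE -det_map_mx /char_poly_mx.
congr (\det _); apply/matrixP => i j; rewrite !mxE.
case: (i == j); by rewrite /= ?mulr1n ?mulr0n horner_evalE hornerD hornerN
  ?hornerX ?horner0 hornerC.
Qed.

Lemma extE' m n (hmn : (m <= n)%N) (B : 'M[k]_(m, n)) :
  B *m (pid_mx m)^T \in unitmx -> exists2 G, G \in unitmx & B *m G = pid_mx m.
Proof.
have := subnKC hmn; move: (n - m)%N => r e; subst n; exact: extE.
Qed.

Variables (m n : nat) (hmn : (m <= n)%N) (I : finType) (p : I -> nat).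
Variable phi : 'M[k]_(m, n) -> (forall i, 'M[k]_(n, p i)) -> k.
Hypothesis phi_poly : forall (PB : 'M[{poly k}]_(m, n)) (PA : forall i, 'M[{poly k}]_(n, p i)),
  exists q : {poly k}, forall t, phi (ev t PB) (fun i => ev t (PA i)) = q.[t].
Hypothesis phi_inv : forall G : 'M[k]_n, G \in unitmx ->
  forall B A, phi (B *m G) (fun i => invmx G *m A i) = phi B A.

Local Notation E := (pid_mx m : 'M[k]_(m, n)).

Lemma EEt : E *m E^T = 1%:M.
Proof. by rewrite tr_pid_mx pid_mx_id // pid_mx_1. Qed.

Definition Pm := E^T *m E.
Definition Sm (u : k) : 'M[k]_n := Pm + u *: (1%:M - Pm).

Lemma EP : E *m Pm = E.
Proof. by rewrite /Pm mulmxA EEt mul1mx. Qed.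

Lemma PP : Pm *m Pm = Pm.
Proof. by rewrite {1}/Pm -mulmxA EP. Qed.

Lemma ES u : E *m Sm u = E.
Proof. by rewrite /Sm mulmxDr -scalemxAr mulmxBr mulmx1 EP subrr scaler0 addr0. Qed.

Lemma SM u v : Sm u *m Sm v = Sm (u * v).
Proof.
have h1 : Pm *m (1%:M - Pm) = 0 by rewrite mulmxBr mulmx1 PP subrr.
have h2 : (1%:M - Pm) *m Pm = 0 by rewrite mulmxBl mul1mx PP subrr.
have h3 : (1%:M - Pm) *m (1%:M - Pm) = 1%:M - Pm by rewrite mulmxBl mul1mx h1 subr0.
rewrite /Sm mulmxDr !mulmxDl -!scalemxAr -!scalemxAl PP h1 h2 h3 !scaler0 addr0 add0r.
by rewrite scalerA mulrC.
Qed.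

Lemma S_unit u : u != 0 -> Sm u \in unitmx /\ invmx (Sm u) = Sm u^-1.
Proof.
move=> u0; have h : Sm u *m Sm u^-1 = 1%:M.
  by rewrite SM mulfV // /Sm scale1r addrC subrK.
split; first exact: (mulmx1_unit h).1.
by rewrite -[LHS]mulmx1 -h mulmxA mulVmx ?mul1mx //; exact: (mulmx1_unit h).1.
Qed.

Definition PS : 'M[{poly k}]_n :=
  map_mx polyC Pm + 'X%:M *m (1%:M - map_mx polyC Pm).

Lemma ev_PS u : ev u PS = Sm u.
Proof.
by rewrite /PS ev_add ev_mul ev_X ev_sub ev_one ev_const mul_scalar_mx.
Qed.

Lemma step1 B A : B *m E^T \in unitmx ->
  phi B A = phi E (fun i => E^T *m (B *m A i)).
Proof.
move=> uB; have [G uG BG] := extE' hmn uB.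
rewrite -(phi_inv uG) BG.
set A' := fun i => invmx G *m A i.
have hB : B = E *m invmx G by rewrite -BG mulmxK.
have [q hq] := phi_poly (map_mx polyC E) (fun i => PS *m map_mx polyC (A' i)).
have hq' : forall u, q.[u] = phi E (fun i => Sm u *m A' i).
  move=> u; rewrite -hq ev_const; congr (phi _ _).
  by apply: functional_extensionality_dep => i; rewrite ev_mul ev_PS ev_const.
have h0 := @poly_const_nz _ hchar q (phi E A').
rewrite -{1}h0; last first.
  move=> u u0; have [uS iS] := S_unit (invr_neq0 u0).
  by rewrite hq' -[in RHS](phi_inv uS) ES iS invrK.
rewrite hq'; congr (phi _ _); apply: functional_extensionality_dep => i.
rewrite /Sm scale0r addr0 /Pm /A' hB -!mulmxA; done.
Qed.

Lemma core B A : phi B A = phi E (fun i => E^T *m (B *m A i)).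
Proof.
pose PB := map_mx polyC B + 'X%:M *m map_mx polyC E.
have evPB t : ev t PB = B + t *: E.
  by rewrite /PB ev_add ev_mul ev_X !ev_const mul_scalar_mx.
have [q1 h1] := phi_poly PB (fun i => map_mx polyC (A i)).
have [q2 h2] := phi_poly (map_mx polyC E)
   (fun i => map_mx polyC E^T *m (PB *m map_mx polyC (A i))).
pose d := char_poly (- (B *m E^T)).
have hd t : d.[t] = \det (B *m E^T + t%:M).
  by rewrite char_poly_ev opprK addrC.
have hBt t : (B + t *: E) *m E^T = B *m E^T + t%:M.
  by rewrite mulmxDl -scalemxAl EEt scalemx1.
have hz : (q1 - q2) * d = 0.
  apply: poly_eq0_all => // t; rewrite hornerM hornerD hornerN.
  have [d0|dn0] := eqVneq d.[t] 0; first by rewrite d0 mulr0.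
  rewrite -h1 -h2 (@step1 _ (fun i => ev t (map_mx polyC (A i)))).
    rewrite ev_const evPB; apply/eqP; rewrite mulf_eq0 subr_eq0; apply/orP; left.
    apply/eqP; congr (phi _ _); apply: functional_extensionality_dep => i.
    by rewrite !ev_mul !ev_const evPB.
  by rewrite evPB unitmxE unitfE hBt -hd.
have dn0 : d != 0 by apply: monic_neq0; apply: char_poly_monic.
move/eqP: hz; rewrite mulf_eq0 (negPf dn0) orbF subr_eq0 => /eqP e12.
have eA : (fun i => ev 0 (map_mx polyC (A i))) = A.
  by apply: functional_extensionality_dep => i; rewrite ev_const.
have := h1 0; rewrite evPB scale0r addr0 eA => ->.
rewrite e12 -h2 ev_const; congr (phi _ _); apply: functional_extensionality_dep => i.
by rewrite !ev_mul !ev_const evPB scale0r addr0.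
Qed.
End Core2.

Section CoreRev.
Variable k : fieldType.
Hypothesis hchar : [pchar k] =i pred0.
Variables (m n : nat) (hmn : (m <= n)%N) (I : finType) (p : I -> nat).
Variable phi : 'M[k]_(n, m) -> (forall i, 'M[k]_(p i, n)) -> k.
Hypothesis phi_poly : forall (PB : 'M[{poly k}]_(n, m)) (PA : forall i, 'M[{poly k}]_(p i, n)),
  exists q : {poly k}, forall t, phi (ev t PB) (fun i => ev t (PA i)) = q.[t].
Hypothesis phi_inv : forall G : 'M[k]_n, G \in unitmx ->
  forall B A, phi (invmx G *m B) (fun i => A i *m G) = phi B A.

Lemma core_rev B A : phi B A =
  phi (pid_mx m : 'M_(m, n))^T (fun i => A i *m B *m (pid_mx m : 'M_(m, n))).
Proof.
pose psi (B' : 'M[k]_(m, n)) (A' : forall i, 'M[k]_(n, p i)) :=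
  phi B'^T (fun i => (A' i)^T).
have Hpoly : forall (PB : 'M[{poly k}]_(m, n)) (PA : forall i, 'M[{poly k}]_(n, p i)),
    exists q : {poly k}, forall t, psi (ev t PB) (fun i => ev t (PA i)) = q.[t].
  move=> PB PA; have [q hq] := phi_poly PB^T (fun i => (PA i)^T).
  exists q => t; rewrite -hq /psi /ev map_trmx; congr (phi _ _).
  by apply: functional_extensionality_dep => i; rewrite map_trmx.
have Hinv : forall G : 'M[k]_n, G \in unitmx ->
    forall B A, psi (B *m G) (fun i => invmx G *m A i) = psi B A.
  move=> G uG B' A'; rewrite /psi.
  have uH : (invmx G)^T \in unitmx by rewrite unitmx_tr unitmx_inv.
  rewrite -[RHS](phi_inv uH); congr (phi _ _).
    by rewrite trmx_mul -trmx_inv invmxK.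
  by apply: functional_extensionality_dep => i; rewrite trmx_mul.
have e1 : phi B A = psi B^T (fun i => (A i)^T).
  rewrite /psi trmxK; congr (phi _ _).
  by apply: functional_extensionality_dep => i; rewrite trmxK.
rewrite e1 (@core k hchar m n hmn I p psi Hpoly Hinv) /psi; congr (phi _ _).
by apply: functional_extensionality_dep => i; rewrite !trmx_mul !trmxK ?mulmxA.
Qed.
End CoreRev.

Section Gen.
Variable R : nmodType.
Definition mget r c (M : 'M[R]_(r, c)) (i j : nat) : R :=
  match (insub i : option 'I_r), (insub j : option 'I_c) with
  | Some i', Some j' => M i' j'
  | _, _ => 0
  end.
Definition mcast r c r' c' (M : 'M[R]_(r, c)) : 'M[R]_(r', c') :=
  \matrix_(i, j) mget M i j.
Arguments mcast {r c r' c'} M.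

Lemma mgetE r c (M : 'M[R]_(r, c)) (i : 'I_r) (j : 'I_c) : mget M i j = M i j.
Proof. by rewrite /mget !valK. Qed.

Lemma mcast_id r c (M : 'M[R]_(r, c)) : mcast M = M.
Proof. by apply/matrixP => i j; rewrite mxE mgetE. Qed.

Lemma mcast2 r c r' c' (e1 : r = r') (e2 : c = c') (M : 'M[R]_(r, c)) :
  mcast (mcast M : 'M_(r', c')) = M.
Proof. by subst; rewrite !mcast_id. Qed.
End Gen.
Arguments mcast {R r c r' c'} M.

Section Gen2.
Variable k : fieldType.

Lemma mget_ev (t : k) r c (P : 'M[{poly k}]_(r, c)) i j :
  mget (map_mx (horner_eval t) P) i j = (mget P i j).[t].
Proof.
rewrite /mget; case: (insub i : option 'I_r) => [i'|]; case: (insub j : option 'I_c) => [j'|];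
  by rewrite ?mxE ?horner0.
Qed.

Lemma mcast_invmul r r' c (e : r = r') (G : 'M[k]_r) (X : 'M[k]_(r, c)) :
  invmx (mcast G : 'M_r') *m (mcast X : 'M_(r', c)) = mcast (invmx G *m X).
Proof. by subst; rewrite !mcast_id. Qed.

Lemma mcast_mulr r c c' (e : c = c') (X : 'M[k]_(r, c)) (G : 'M[k]_c) :
  (mcast X : 'M_(r, c')) *m (mcast G : 'M_c') = mcast (X *m G).
Proof. by subst; rewrite !mcast_id. Qed.

Lemma mcast_unit r r' (e : r = r') (G : 'M[k]_r) : G \in unitmx -> (mcast G : 'M_r') \in unitmx.
Proof. by subst; rewrite mcast_id. Qed.

Variables (Q : quiver) (beta : qV Q -> nat).

Lemma pf_sum I (r : seq I) (F : I -> Rep k Q beta -> k) :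
  (forall i, polyfun k Q beta (F i)) -> polyfun k Q beta (fun W => \sum_(i <- r) F i W).
Proof.
move=> h; elim: r => [|x r IH].
  have -> : (fun W => \sum_(i <- [::]) F i W) = (fun _ => 0).
    by apply: functional_extensionality => W; rewrite big_nil.
  by constructor.
have -> : (fun W => \sum_(i <- x :: r) F i W) = (fun W => F x W + \sum_(i <- r) F i W).
  by apply: functional_extensionality => W; rewrite big_cons.
by apply: pf_add.
Qed.

Lemma pf_mget a i j : polyfun k Q beta (fun W => mget (W a) i j).
Proof.
rewrite /mget; case: (insub i : option 'I_(beta (qh a))) => [i'|];
  case: (insub j : option 'I_(beta (qt a))) => [j'|]; by constructor.
Qed.

Lemma pf_path (f : Rep k Q beta -> k) (Phi : k -> Rep k Q beta) :
  polyfun k Q beta f ->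
  (forall a i j, exists q : {poly k}, forall t, Phi t a i j = q.[t]) ->
  exists q : {poly k}, forall t, f (Phi t) = q.[t].
Proof.
move=> pf hP; elim: pf.
- by move=> c; exists c%:P => t; rewrite hornerC.
- exact: hP.
- by move=> f1 f2 _ [q1 h1] _ [q2 h2]; exists (q1 + q2) => t; rewrite hornerD h1 h2.
- by move=> f1 f2 _ [q1 h1] _ [q2 h2]; exists (q1 * q2) => t; rewrite hornerM h1 h2.
Qed.

Lemma pf_ext (f g : Rep k Q beta -> k) : (forall W, f W = g W) ->
  polyfun k Q beta g -> polyfun k Q beta f.
Proof. by move=> h; have -> : f = g by apply: functional_extensionality. Qed.

Lemma pf_mget_mulC a r (C : 'M[k]_(r, beta (qh a))) i j :
  polyfun k Q beta (fun W => mget (C *m W a) i j).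
Proof.
rewrite /mget; case: (insub i : option 'I_r) => [i'|];
  case: (insub j : option 'I_(beta (qt a))) => [j'|]; try by constructor.
apply: (pf_ext (g := fun W => \sum_(l <- index_enum _) C i' l * W a l j')).
  by move=> W; rewrite mxE.
by apply: pf_sum => l; apply: pf_mul; constructor.
Qed.

Lemma pf_mul_mget a1 a2 (i : 'I_(beta (qh a1))) (j : 'I_(beta (qt a2))) :
  polyfun k Q beta (fun W => (W a1 *m (mcast (W a2) : 'M_(beta (qt a1), beta (qt a2)))) i j).
Proof.
apply: (pf_ext (g := fun W => \sum_(l <- index_enum _) W a1 i l * mget (W a2) l j)).
  by move=> W; rewrite mxE; apply: eq_bigr => l _; rewrite mxE.
by apply: pf_sum => l; apply: pf_mul; [constructor | apply: pf_mget].
Qed.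

Lemma pf_mget_mulR a c (C : 'M[k]_(beta (qt a), c)) i j :
  polyfun k Q beta (fun W => mget (W a *m C) i j).
Proof.
rewrite /mget; case: (insub i : option 'I_(beta (qh a))) => [i'|];
  case: (insub j : option 'I_c) => [j'|]; try by constructor.
apply: (pf_ext (g := fun W => \sum_(l <- index_enum _) W a i' l * C l j')).
  by move=> W; rewrite mxE.
by apply: pf_sum => l; apply: pf_mul; constructor.
Qed.

Lemma pf_mget_mul a1 a2 (i : 'I_(beta (qh a2))) (j : 'I_(beta (qt a1))) :
  polyfun k Q beta (fun W => ((mcast (W a2) : 'M_(beta (qh a2), beta (qh a1))) *m W a1) i j).
Proof.
apply: (pf_ext (g := fun W => \sum_(l <- index_enum 'I_(beta (qh a1))) mget (W a2) i l * W a1 l j)).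
  by move=> W; rewrite mxE; apply: eq_bigr => l _; rewrite mxE.
by apply: pf_sum => l; apply: pf_mul; [apply: pf_mget | constructor].
Qed.

Variables (Q' : quiver) (beta' : qV Q' -> nat).
Lemma pf_comp (f : Rep k Q beta -> k) (Psi : Rep k Q' beta' -> Rep k Q beta) :
  polyfun k Q beta f ->
  (forall a i j, polyfun k Q' beta' (fun W => Psi W a i j)) ->
  polyfun k Q' beta' (fun W => f (Psi W)).
Proof.
move=> pf hP; elim: pf.
- by move=> c; constructor.
- exact: hP.
- by move=> f1 f2 _ h1 _ h2; apply: pf_add.
- by move=> f1 f2 _ h1 _ h2; apply: pf_mul.
Qed.
End Gen2.

Section Restr.
Variables (R : comNzRingType) (V : finType) (v0 : V).
Lemma prod_restr (F : V -> R) : F v0 = 1 ->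
  \prod_(x : V) F x = \prod_(x : {x | x != v0}) F (val x).
Proof.
move=> h; rewrite (bigD1 v0) //= h mul1r.
rewrite (reindex_omap (val : {x | x != v0} -> V) insub); last first.
  by move=> i ni; rewrite insubT.
by apply: eq_bigl=> -[i iA]/=; rewrite insubT iA /= eqxx.
Qed.
End Restr.

Section Fwd.
Variables (k : fieldType) (hchar : [pchar k] =i pred0) (Q : quiver) (b : qA Q)
  (hw : qh b != qt b) (beta : qV Q -> nat) (sigma : qV Q -> int)
  (hbeta : (beta (qh b) <= beta (qt b))%N) (hsigma : sigma (qt b) = 0)
  (hout : forall a : qA Q, qt a = qt b -> a = b).

Local Notation v0 := (qt b).
Local Notation QB := (Qbar Q (qt b) (qh b) hw).
Local Notation betab := (restr (qt b) beta).
Local Notation n := (beta (qt b)).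
Local Notation m := (beta (qh b)).
Local Notation IA := {a : qA Q | inP Q (qt b) a}.
Local Notation KA := {a : qA Q | keepP Q (qt b) a}.
Local Notation E := (pid_mx m : 'M[k]_(m, n)).

Definition upd (W : Rep k Q beta) (B : 'M[k]_(m, n))
  (A : forall a' : IA, 'M[k]_(n, beta (qt (val a')))) : Rep k Q beta :=
  fun a => match (insub a : option IA) with
           | Some a' => mcast (A a')
           | None => if a == b then mcast B else W a end.

Definition piW (W : Rep k Q beta) : Rep k QB betab :=
  fun e => match e as e0 return 'M[k]_(betab (@qh QB e0), betab (@qt QB e0)) with
   | inl a' => W (val a')
   | inr a' => W b *m mcast (W (val a'))
   end.

Definition lift (W' : Rep k QB betab) : Rep k Q beta :=
  fun a => match (insub a : option KA) with
   | Some a' => mcast (W' (inl a'))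
   | None => match (insub a : option IA) with
             | Some a' => mcast (E^T *m W' (inr a'))
             | None => mcast E end end.

Lemma classify a : ~~ keepP Q v0 a -> ~~ inP Q v0 a -> a = b.
Proof.
rewrite /keepP /inP negb_and !negbK => /orP [/eqP/hout //|hh].
by rewrite hh /= negbK => /eqP /hout.
Qed.

Lemma b_notkeep : ~~ keepP Q v0 b.
Proof. by rewrite /keepP eqxx. Qed.
Lemma b_notin : ~~ inP Q v0 b.
Proof. by rewrite /inP (negPf hw). Qed.


Lemma upd_id W : upd W (W b) (fun a' => mcast (W (val a'))) = W.
Proof.
apply: functional_extensionality_dep => a; rewrite /upd.
case: insubP => [a' ha' ea|ha].
  subst a; apply: mcast2 => //; move: ha' => /andP [/eqP -> _] //.
case: eqP => [eab|//]; subst a; exact: mcast_id.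
Qed.


Definition gv (G : 'M[k]_n) : GLfam k Q beta :=
  fun x => if x == v0 then mcast G else 1%:M.

Lemma gv_GL G : G \in unitmx -> is_GL k Q beta (gv G).
Proof.
move=> uG x; rewrite /gv; case: eqP => [ex|_]; last exact: unitmx1.
by apply: mcast_unit => //; rewrite ex.
Qed.

Lemma gv_charac G : charac k Q beta sigma (gv G) = 1.
Proof.
apply: big1 => x _; rewrite /gv; case: eqP => [->|_]; first by rewrite hsigma expr0z.
by rewrite det1 exp1rz.
Qed.

Lemma upd_act W B A G : G \in unitmx ->
  act k Q beta (GLinv k Q beta (gv G)) (upd W B A) =
  upd W (B *m G) (fun i => invmx G *m A i).
Proof.
move=> uG; apply: functional_extensionality_dep => a; rewrite /act /GLinv invmxK /upd.
case: insubP => [a' ha' ea|ha].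
  subst a; have /andP [h1 h2] := ha'; rewrite /gv h1 (negPf h2) mulmx1.
  by apply: mcast_invmul; rewrite (eqP h1).
case: eqP => [eab|nab].
  by subst a; rewrite /gv eqxx (negPf hw) invmx1 mul1mx !mcast_id.
have ht : qt a != v0 by apply/eqP => /hout.
have hh : qh a != v0.
  by apply: contra ha => hh; rewrite /inP hh ht.
by rewrite /gv (negPf ht) (negPf hh) invmx1 mul1mx mulmx1.
Qed.


Lemma upd_lift W :
  upd W E (fun a' => E^T *m (W b *m mcast (W (val a')))) = lift (piW W).
Proof.
apply: functional_extensionality_dep => a; rewrite /upd /lift.
case: (insubP (_ : subType (keepP Q v0)) a) => [a1 ha1 ea1|ha1];
  case: (insubP (_ : subType (inP Q v0)) a) => [a2 ha2 ea2|ha2].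
- subst a; move: ha1 ha2; rewrite /keepP /inP -ea2 => /andP [_ h] /andP [h' _].
  by rewrite h' in h.
- subst a; have nb : val a1 != b.
    by apply/eqP => eb; move: ha1; rewrite eb (negPf b_notkeep).
  by rewrite (negPf nb) /= mcast_id.
- by [].
- by rewrite (classify ha1 ha2) eqxx.
Qed.

Lemma key f : SI k Q beta sigma f -> forall W, f W = f (lift (piW W)).
Proof.
move=> [pf hSI] W.
have Hpoly : forall (PB : 'M[{poly k}]_(m, n))
    (PA : forall i : IA, 'M[{poly k}]_(n, beta (qt (val i)))),
    exists q : {poly k}, forall t, f (upd W (ev t PB) (fun i => ev t (PA i))) = q.[t].
  move=> PB PA; apply: pf_path => // a i j; rewrite /upd.
  case: insubP => [a' _ _|_].
    by exists (mget (PA a') i j) => t; rewrite mxE /ev mget_ev.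
  case: eqP => _.
    by exists (mget PB i j) => t; rewrite mxE /ev mget_ev.
  by exists (W a i j)%:P => t; rewrite hornerC.
have Hinv : forall G : 'M[k]_n, G \in unitmx -> forall B A,
    f (upd W (B *m G) (fun i => invmx G *m A i)) = f (upd W B A).
  move=> G uG B A; rewrite -upd_act // hSI ?gv_charac ?mul1r //; exact: gv_GL.
have hc := @core k hchar m n hbeta IA (fun a' => beta (qt (val a')))
  (fun B A => f (upd W B A)) Hpoly Hinv.
by rewrite -{1}(upd_id W) hc upd_lift.
Qed.


Lemma piW_lift W' : piW (lift W') = W'.
Proof.
apply: functional_extensionality_dep => -[a'|a'] /=.
  by rewrite /lift valK; apply: mcast_id.
have hk : ~~ keepP Q v0 (val a').
  by case/andP: (valP a') => h _; rewrite /keepP h andbF.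
rewrite /lift (insubN _ b_notkeep) (insubN _ b_notin) (insubN _ hk) valK mcast_id.
rewrite mcast2; first by rewrite mulmxA (EEt k hbeta) mul1mx.
  by case/andP: (valP a') => /eqP -> _.
by [].
Qed.

Lemma vcastL (g : GLfam k Q beta) x y (e : x = y) c (X : 'M[k]_(beta x, c)) (Y : 'M[k]_c) :
  (mcast (invmx (g x) *m X *m Y) : 'M_(beta y, c)) = invmx (g y) *m mcast X *m Y.
Proof. by subst; rewrite !mcast_id. Qed.

Lemma piW_act g W : is_GL k Q beta g ->
  piW (act k Q beta (GLinv k Q beta g) W) =
  act k QB betab (GLinv k QB betab (fun x => g (val x))) (piW W).
Proof.
move=> gGL; apply: functional_extensionality_dep => -[a'|a'] //=.
rewrite /act /GLinv !invmxK /= vcastL; last by case/andP: (valP a') => /eqP.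
by rewrite !mulmxA (mulmxK (gGL _)).
Qed.

Lemma charac_restr g : charac k Q beta sigma g =
  charac k QB betab (restr v0 sigma) (fun x => g (val x)).
Proof. by rewrite /charac (prod_restr (v0 := v0)) // hsigma expr0z. Qed.

Definition gext (g' : GLfam k QB betab) : GLfam k Q beta :=
  fun x => match (insub x : option (barV Q v0)) with
           | Some x' => mcast (g' x') | None => 1%:M end.

Lemma gext_GL g' : is_GL k QB betab g' -> is_GL k Q beta (gext g').
Proof.
move=> h x; rewrite /gext; case: insubP => [x' _ ex|_]; last exact: unitmx1.
by subst x; rewrite mcast_id; apply: h.
Qed.

Lemma gext_restr g' : (fun x => gext g' (val x)) = g'.
Proof. by apply: functional_extensionality_dep => x; rewrite /gext valK mcast_id. Qed.


Lemma pf_lift a i j : polyfun k QB betab (fun W' => lift W' a i j).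
Proof.
rewrite /lift; case: (insubP (_ : subType (keepP Q v0)) a) => [a' _ _|_].
  apply: (@pf_ext k QB betab _ (fun W' => mget (W' (inl a')) i j)).
    by move=> W'; rewrite mxE.
  exact: pf_mget.
case: (insubP (_ : subType (inP Q v0)) a) => [a' _ _|_].
  apply: (@pf_ext k QB betab _ (fun W' => mget (E^T *m W' (inr a')) i j)).
    by move=> W'; rewrite mxE.
  exact: pf_mget_mulC.
apply: (@pf_ext k QB betab _ (fun W' => mget E i j)).
  by move=> W'; rewrite mxE.
by constructor.
Qed.

Lemma pf_piW e i j : polyfun k Q beta (fun W => piW W e i j).
Proof. by case: e i j => a' i j /=; [constructor | apply: pf_mul_mget]. Qed.

Theorem fwd_iso : SI_iso k Q beta sigma QB betab (restr v0 sigma).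
Proof.
exists (fun f W' => f (lift W')); split.
- by [].
- move=> f hf; have [pf hSI] := hf; split.
    by apply: pf_comp => //; exact: pf_lift.
  move=> g' gGL W'; set g := gext g'.
  have gG : is_GL k Q beta g by apply: gext_GL.
  rewrite -{1}(piW_lift W') -{1}(gext_restr g') -piW_act // -key //.
  by rewrite hSI // charac_restr gext_restr.
- move=> f1 f2 h1 h2 e; apply: functional_extensionality => W.
  by rewrite (key h1) (key h2); exact: (congr1 (fun F => F (piW W)) e).
- move=> f' [pf' hSI']; exists (fun W => f' (piW W)); last first.
    by apply: functional_extensionality => W'; rewrite piW_lift.
  split; first by apply: pf_comp => //; exact: pf_piW.
  move=> g gGL W; rewrite piW_act // hSI' ?charac_restr //.
  by move=> x; apply: gGL.
Qed.

End Fwd.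

Section Rev.
Variables (k : fieldType) (hchar : [pchar k] =i pred0) (Q : quiver) (b : qA Q)
  (hw : qt b != qh b) (beta : qV Q -> nat) (sigma : qV Q -> int)
  (hbeta : (beta (qt b) <= beta (qh b))%N) (hsigma : sigma (qh b) = 0)
  (hin : forall a : qA Q, qh a = qh b -> a = b).

Local Notation v0 := (qh b).
Local Notation QB := (Qbar_rev Q (qh b) (qt b) hw).
Local Notation betab := (restr (qh b) beta).
Local Notation n := (beta (qh b)).
Local Notation m := (beta (qt b)).
Local Notation OA := {a : qA Q | outP Q (qh b) a}.
Local Notation KA := {a : qA Q | keepP Q (qh b) a}.
Local Notation E := (pid_mx m : 'M[k]_(m, n)).

Definition updr (W : Rep k Q beta) (B : 'M[k]_(n, m))
  (A : forall a' : OA, 'M[k]_(beta (qh (val a')), n)) : Rep k Q beta :=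
  fun a => match (insub a : option OA) with
           | Some a' => mcast (A a')
           | None => if a == b then mcast B else W a end.

Definition piWr (W : Rep k Q beta) : Rep k QB betab :=
  fun e => match e as e0 return 'M[k]_(betab (@qh QB e0), betab (@qt QB e0)) with
   | inl a' => W (val a')
   | inr a' => mcast (W (val a')) *m W b
   end.

Definition liftr (W' : Rep k QB betab) : Rep k Q beta :=
  fun a => match (insub a : option KA) with
   | Some a' => mcast (W' (inl a'))
   | None => match (insub a : option OA) with
             | Some a' => mcast (W' (inr a') *m E)
             | None => mcast E^T end end.

Lemma classifyr a : ~~ keepP Q v0 a -> ~~ outP Q v0 a -> a = b.
Proof.
rewrite /keepP /outP negb_and !negbK => /orP [hh|/eqP/hin //].
by rewrite hh /= negbK => /eqP /hin.
Qed.

Lemma b_notkeepr : ~~ keepP Q v0 b.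
Proof. by rewrite /keepP eqxx andbF. Qed.
Lemma b_notout : ~~ outP Q v0 b.
Proof. by rewrite /outP (negPf hw). Qed.

Lemma updr_id W : updr W (W b) (fun a' => mcast (W (val a'))) = W.
Proof.
apply: functional_extensionality_dep => a; rewrite /updr.
case: insubP => [a' ha' ea|ha].
  subst a; apply: mcast2 => //; move: ha' => /andP [/eqP -> _] //.
case: eqP => [eab|//]; subst a; exact: mcast_id.
Qed.

Definition gvr (G : 'M[k]_n) : GLfam k Q beta :=
  fun x => if x == v0 then mcast G else 1%:M.

Lemma gvr_GL G : G \in unitmx -> is_GL k Q beta (gvr G).
Proof.
move=> uG x; rewrite /gvr; case: eqP => [ex|_]; last exact: unitmx1.
by apply: mcast_unit => //; rewrite ex.
Qed.

Lemma gvr_charac G : charac k Q beta sigma (gvr G) = 1.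
Proof.
apply: big1 => x _; rewrite /gvr; case: eqP => [->|_]; first by rewrite hsigma expr0z.
by rewrite det1 exp1rz.
Qed.

Lemma updr_act W B A G : G \in unitmx ->
  act k Q beta (GLinv k Q beta (gvr G)) (updr W B A) =
  updr W (invmx G *m B) (fun i => A i *m G).
Proof.
move=> uG; apply: functional_extensionality_dep => a; rewrite /act /GLinv invmxK /updr.
case: insubP => [a' ha' ea|ha].
  subst a; have /andP [h1 h2] := ha'; rewrite /gvr h1 (negPf h2) invmx1 mul1mx.
  by apply: mcast_mulr; rewrite (eqP h1).
case: eqP => [eab|nab].
  by subst a; rewrite /gvr eqxx (negPf hw) mulmx1 !mcast_id.
have hh : qh a != v0 by apply/eqP => /hin.
have ht : qt a != v0.
  by apply: contra ha => ht; rewrite /outP ht hh.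
by rewrite /gvr (negPf ht) (negPf hh) invmx1 mul1mx mulmx1.
Qed.

Lemma updr_lift W :
  updr W E^T (fun a' => mcast (W (val a')) *m W b *m E) = liftr (piWr W).
Proof.
apply: functional_extensionality_dep => a; rewrite /updr /liftr.
case: (insubP (_ : subType (keepP Q v0)) a) => [a1 ha1 ea1|ha1];
  case: (insubP (_ : subType (outP Q v0)) a) => [a2 ha2 ea2|ha2].
- subst a; move: ha1 ha2; rewrite /keepP /outP -ea2 => /andP [h _] /andP [h' _].
  by rewrite h' in h.
- subst a; have nb : val a1 != b.
    by apply/eqP => eb; move: ha1; rewrite eb (negPf b_notkeepr).
  by rewrite (negPf nb) /= mcast_id.
- by [].
- by rewrite (classifyr ha1 ha2) eqxx.
Qed.

Lemma keyr f : SI k Q beta sigma f -> forall W, f W = f (liftr (piWr W)).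
Proof.
move=> [pf hSI] W.
have Hpoly : forall (PB : 'M[{poly k}]_(n, m))
    (PA : forall i : OA, 'M[{poly k}]_(beta (qh (val i)), n)),
    exists q : {poly k}, forall t, f (updr W (ev t PB) (fun i => ev t (PA i))) = q.[t].
  move=> PB PA; apply: pf_path => // a i j; rewrite /updr.
  case: insubP => [a' _ _|_].
    by exists (mget (PA a') i j) => t; rewrite mxE /ev mget_ev.
  case: eqP => _.
    by exists (mget PB i j) => t; rewrite mxE /ev mget_ev.
  by exists (W a i j)%:P => t; rewrite hornerC.
have Hinv : forall G : 'M[k]_n, G \in unitmx -> forall B A,
    f (updr W (invmx G *m B) (fun i => A i *m G)) = f (updr W B A).
  move=> G uG B A; rewrite -updr_act // hSI ?gvr_charac ?mul1r //; exact: gvr_GL.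
have hc := @core_rev k hchar m n hbeta OA (fun a' => beta (qh (val a')))
  (fun B A => f (updr W B A)) Hpoly Hinv.
by rewrite -{1}(updr_id W) hc updr_lift.
Qed.

Lemma piWr_lift W' : piWr (liftr W') = W'.
Proof.
apply: functional_extensionality_dep => -[a'|a'] /=.
  by rewrite /liftr valK; apply: mcast_id.
have hk : ~~ keepP Q v0 (val a').
  by case/andP: (valP a') => h _; rewrite /keepP h.
rewrite /liftr (insubN _ b_notkeepr) (insubN _ b_notout) (insubN _ hk) valK mcast_id.
rewrite mcast2; first by rewrite -mulmxA (EEt k hbeta) mulmx1.
  by [].
by case/andP: (valP a') => /eqP -> _.
Qed.

Lemma vcastR (g : GLfam k Q beta) x y (e : x = y) r (X : 'M[k]_(r, beta x)) :
  (mcast (X *m g x) : 'M_(r, beta y)) = mcast X *m g y.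
Proof. by subst; rewrite !mcast_id. Qed.

Lemma mcast_mull r c c' (e : c = c') (M : 'M[k]_r) (X : 'M[k]_(r, c)) :
  (mcast (M *m X) : 'M_(r, c')) = M *m mcast X.
Proof. by subst; rewrite !mcast_id. Qed.

Lemma piWr_act g W : is_GL k Q beta g ->
  piWr (act k Q beta (GLinv k Q beta g) W) =
  act k QB betab (GLinv k QB betab (fun x => g (val x))) (piWr W).
Proof.
move=> gGL; apply: functional_extensionality_dep => -[a'|a'] //=.
rewrite /act /GLinv !invmxK /= vcastR; last by case/andP: (valP a') => /eqP.
rewrite mcast_mull; last by case/andP: (valP a') => /eqP ->.
by rewrite !mulmxA (mulmxK (gGL _)).
Qed.

Lemma charac_restrr g : charac k Q beta sigma g =
  charac k QB betab (restr v0 sigma) (fun x => g (val x)).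
Proof. by rewrite /charac (prod_restr (v0 := v0)) // hsigma expr0z. Qed.

Definition gextr (g' : GLfam k QB betab) : GLfam k Q beta :=
  fun x => match (insub x : option (barV Q v0)) with
           | Some x' => mcast (g' x') | None => 1%:M end.

Lemma gextr_GL g' : is_GL k QB betab g' -> is_GL k Q beta (gextr g').
Proof.
move=> h x; rewrite /gextr; case: insubP => [x' _ ex|_]; last exact: unitmx1.
by subst x; rewrite mcast_id; apply: h.
Qed.

Lemma gextr_restr g' : (fun x => gextr g' (val x)) = g'.
Proof. by apply: functional_extensionality_dep => x; rewrite /gextr valK mcast_id. Qed.

Lemma pf_liftr a i j : polyfun k QB betab (fun W' => liftr W' a i j).
Proof.
rewrite /liftr; case: (insubP (_ : subType (keepP Q v0)) a) => [a' _ _|_].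
  apply: (@pf_ext k QB betab _ (fun W' => mget (W' (inl a')) i j)).
    by move=> W'; rewrite mxE.
  exact: pf_mget.
case: (insubP (_ : subType (outP Q v0)) a) => [a' _ _|_].
  apply: (@pf_ext k QB betab _ (fun W' => mget (W' (inr a') *m E) i j)).
    by move=> W'; rewrite mxE.
  exact: pf_mget_mulR.
apply: (@pf_ext k QB betab _ (fun W' => mget E^T i j)).
  by move=> W'; rewrite mxE.
by constructor.
Qed.

Lemma pf_piWr e i j : polyfun k Q beta (fun W => piWr W e i j).
Proof. by case: e i j => a' i j /=; [constructor | apply: pf_mget_mul]. Qed.

Theorem rev_iso : SI_iso k Q beta sigma QB betab (restr v0 sigma).
Proof.
exists (fun f W' => f (liftr W')); split.
- by [].
- move=> f hf; have [pf hSI] := hf; split.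
    by apply: pf_comp => //; exact: pf_liftr.
  move=> g' gGL W'; set g := gextr g'.
  have gG : is_GL k Q beta g by apply: gextr_GL.
  rewrite -{1}(piWr_lift W') -{1}(gextr_restr g') -piWr_act // -keyr //.
  by rewrite hSI // charac_restrr gextr_restr.
- move=> f1 f2 h1 h2 e; apply: functional_extensionality => W.
  by rewrite (keyr h1) (keyr h2); exact: (congr1 (fun F => F (piWr W)) e).
- move=> f' [pf' hSI']; exists (fun W => f' (piWr W)); last first.
    by apply: functional_extensionality => W'; rewrite piWr_lift.
  split; first by apply: pf_comp => //; exact: pf_piWr.
  move=> g gGL W; rewrite piWr_act // hSI' ?charac_restrr //.
  by move=> x; apply: gGL.
Qed.

End Rev.

End Aux.

Theorem lemma4p6 (k : closedFieldType) (hchar : [pchar k] =i pred0)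
  (Q : quiver) (hacyc : acyclic Q) (v0 w : qV Q) (hw : w != v0) (b : qA Q)
  (beta : qV Q -> nat) (sigma : qV Q -> int)
  (hbeta : (beta w <= beta v0)%N) (hsigma : sigma v0 = 0%R) :
  (* forward orientation: arrows a_i : v_i -> v0, unique arrow b : v0 -> w *)
  ((qt b = v0 /\ qh b = w /\ (forall a : qA Q, qt a = v0 -> a = b)) ->
   SI_iso k Q beta sigma (Qbar Q v0 w hw) (restr v0 beta) (restr v0 sigma))
  /\
  (* reversed orientation: arrows a_i : v0 -> v_i, unique arrow b : w -> v0 *)
  ((qh b = v0 /\ qt b = w /\ (forall a : qA Q, qh a = v0 -> a = b)) ->
   SI_iso k Q beta sigma (Qbar_rev Q v0 w hw) (restr v0 beta) (restr v0 sigma)).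
Proof.
split.
- move=> [e1 [e2 hout]]; subst v0 w.
  exact: (@Aux.fwd_iso k hchar Q b hw beta sigma hbeta hsigma hout).
- move=> [e1 [e2 hin]]; subst v0 w.
  exact: (@Aux.rev_iso k hchar Q b hw beta sigma hbeta hsigma hin).
Qed.
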